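(* Let $K$ be a field of characteristic $0$. Let $m=(x_1\cdots x_n)^{\alpha}$ and let $f\in K[x_1,\ldots,x_n]$ be a homogeneous polynomial of degree $d=n\alpha$. The following two properties are equivalent: (i) $m(A.x)=c\cdot f(x)$ for some invertible matrix $A\in GL_n(K)$ and some constant $c\in K$; (ii) the Lie algebra $\mathfrak{g}_f$ has a basis made of $n-1$ diagonalizable matrices of trace zero which pairwise commute. Moreover, $f$ is a constant multiple of $m$ if and only if $\mathfrak{g}_f$ is the space of diagonal $n\times n$ matrices of trace zero.
   Context: For $P\in K[x_1,\ldots,x_n]$, the Lie algebra $\mathfrak{g}_P$ of $P$ is the Lie algebra (tangent space at the identity) of the group of invariants $\{A\in GL_n(K): P(A.x)=P(x)\}$; equivalently, $\mathfrak{g}_P$ is the linear subspace of matrices $A=(a_{ij})\in M_n(K)$ such that $\sum_{i,j\in[n]} a_{ij}\,x_j\,\frac{\partial P}{\partial x_i}=0$. $P(A.x)$ denotes the polynomial obtained from $P$ by the linear change of variables $x\mapsto Ax$. *)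

(* Defs.v *)
From HB Require Import structures.
From mathcomp Require Import all_boot all_order all_algebra.
From mathcomp Require Import mpoly.
Set Implicit Arguments. Unset Strict Implicit. Unset Printing Implicit Defensive.
Import Order.TTheory GRing.Theory Num.Theory.
Local Open Scope ring_scope.

Section Defs.
Variables (K : fieldType) (n : nat).

Definition lin_forms (A : 'M[K]_n) : n.-tuple {mpoly K[n]} :=
  [tuple \sum_(j < n) A i j *: 'X_j | i < n].

Definition act (A : 'M[K]_n) (P : {mpoly K[n]}) : {mpoly K[n]} :=
  P \mPo lin_forms A.

Definition prod_monomial (alpha : nat) : {mpoly K[n]} :=
  \prod_(i < n) 'X_i ^+ alpha.

Definition lie_alg (P : {mpoly K[n]}) (A : 'M[K]_n) : Prop :=
  \sum_(i < n) \sum_(j < n) A i j *: ('X_j * mderiv i P) = 0.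

End Defs.
Arguments prod_monomial {K} n alpha.

(* Main.v *)
Require Import Defs.
From HB Require Import structures.
From mathcomp Require Import all_boot all_order all_algebra.
From mathcomp Require Import mpoly.
From mathcomp Require Import zify.
Import Order.TTheory GRing.Theory Num.Theory.
Local Open Scope ring_scope.

Set Implicit Arguments. Unset Strict Implicit. Unset Printing Implicit Defensive.

Section Work.
Variables (K : fieldType) (n : nat).
Local Notation MP := {mpoly K[n]}.

Definition LF (A : 'M[K]_n) (k : 'I_n) : MP := \sum_(j < n) A k j *: 'X_j.
Definition LieS (A : 'M[K]_n) (P : MP) : MP :=
  \sum_(i < n) \sum_(j < n) A i j *: ('X_j * P^`M(i)).

Lemma LieS_alt A P : LieS A P = \sum_i LF A i * P^`M(i).
Proof.
rewrite /LieS /LF; apply: eq_bigr => i _; rewrite mulr_suml.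
by apply: eq_bigr => j _; rewrite scalerAl.
Qed.

Lemma LieSD A P R : LieS A (P + R) = LieS A P + LieS A R.
Proof. by rewrite !LieS_alt -big_split; apply: eq_bigr => i _; rewrite mderivD mulrDr. Qed.

Lemma LieSZ A c P : LieS A (c *: P) = c *: LieS A P.
Proof. by rewrite !LieS_alt scaler_sumr; apply: eq_bigr => i _; rewrite mderivZ scalerAr. Qed.

Lemma LieS0 A : LieS A 0 = 0.
Proof. by have := LieSZ A 0 0; rewrite !scale0r. Qed.

Lemma LieSM A P R : LieS A (P * R) = LieS A P * R + P * LieS A R.
Proof.
rewrite !LieS_alt. rewrite mulr_suml. rewrite mulr_sumr. rewrite -big_split /=. apply: eq_bigr => i _.
rewrite mderivM mulrDr; congr (_ + _); [exact: mulrA | exact: mulrCA].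
Qed.

Lemma LieS1 A : LieS A 1 = 0.
Proof.
rewrite LieS_alt big1 // => i _; by rewrite -mpolyC1 mderivC mulr0.
Qed.

Lemma mderivXU (i k : 'I_n) : ('X_k : MP)^`M(i) = (k == i)%:R.
Proof.
rewrite mderivX mnm1E; case: eqP => [->|_]; last by rewrite scale0r.
have -> : (U_(i) - U_(i))%MM = 0%MM by apply/mnmP => j; rewrite mnmBE subnn mnm0E.
by rewrite mpolyX0 scale1r.
Qed.

Lemma LieS_X A k : LieS A 'X_k = LF A k.
Proof.
rewrite LieS_alt (bigD1 k) //= big1 ?addr0 => [|i ik].
  by rewrite mderivXU eqxx mulr1.
by rewrite mderivXU eq_sym (negbTE ik) mulr0.
Qed.

Lemma act_X (Q : 'M[K]_n) k : act Q 'X_k = LF Q k.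
Proof. by rewrite /act comp_mpolyXU /lin_forms -tnth_nth tnth_mktuple. Qed.

Lemma sumLF (A B : 'M[K]_n) k : \sum_j B k j *: LF A j = LF (B *m A) k.
Proof.
rewrite /LF.
under eq_bigr do rewrite scaler_sumr.
rewrite exchange_big /=; apply: eq_bigr => l _.
by rewrite mxE scaler_suml; apply: eq_bigr => j _; rewrite scalerA.
Qed.

Lemma LieS_LF (A B : 'M[K]_n) k : LieS A (LF B k) = LF (B *m A) k.
Proof.
rewrite -sumLF /LF (big_morph (LieS A) (LieSD A) (LieS0 A)).
by apply: eq_bigr => j _; rewrite LieSZ LieS_X.
Qed.

Lemma actD (Q : 'M[K]_n) P R : act Q (P + R) = act Q P + act Q R.
Proof. exact: comp_mpolyD. Qed.
Lemma actZ (Q : 'M[K]_n) c P : act Q (c *: P) = c *: act Q P.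
Proof. exact: comp_mpolyZ. Qed.
Lemma act0 (Q : 'M[K]_n) : act Q 0 = 0.
Proof. exact: comp_mpoly0. Qed.
Lemma act1 (Q : 'M[K]_n) : act Q 1 = 1.
Proof. exact: comp_mpoly1. Qed.
Lemma actM (Q : 'M[K]_n) P R : act Q (P * R) = act Q P * act Q R.
Proof. by rewrite /act rmorphM. Qed.

Lemma act_LF (Q B : 'M[K]_n) k : act Q (LF B k) = LF (B *m Q) k.
Proof.
rewrite -sumLF /LF (big_morph (act Q) (actD Q) (act0 Q)).
by apply: eq_bigr => j _; rewrite actZ act_X.
Qed.


Lemma mp_ind (Phi : MP -> Prop) : Phi 1 -> (forall i, Phi 'X_i) ->
  (forall P R, Phi P -> Phi R -> Phi (P + R)) ->
  (forall P R, Phi P -> Phi R -> Phi (P * R)) ->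
  (forall c P, Phi P -> Phi (c *: P)) -> forall P, Phi P.
Proof.
move=> h1 hX hD hM hZ.
have h0 : Phi 0 by have := hZ 0 1 h1; rewrite scale0r.
have hXm : forall m, Phi 'X_[m].
  move=> m; rewrite mpolyXE_id; apply: big_ind => // i _.
  elim: (m i) => [|k IH]; first by rewrite expr0.
  by rewrite exprS; apply: hM.
move=> P; rewrite (mpolyE P); apply: big_ind => // m _; exact: hZ.
Qed.

Lemma LieS_act (A A' Q : 'M[K]_n) P : Q *m A = A' *m Q ->
  LieS A (act Q P) = act Q (LieS A' P).
Proof.
move=> hQ; move: P; apply: mp_ind.
- by rewrite act1 !LieS1 act0.
- by move=> i; rewrite act_X LieS_LF LieS_X act_LF hQ.
- by move=> P R h1 h2; rewrite actD LieSD h1 h2 LieSD actD.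
- by move=> P R h1 h2; rewrite actM LieSM h1 h2 LieSM actD !actM.
- by move=> c P h; rewrite actZ LieSZ h LieSZ actZ.
Qed.

Lemma act_comp (A B : 'M[K]_n) P : act A (act B P) = act (B *m A) P.
Proof.
move: P; apply: mp_ind.
- by rewrite !act1.
- by move=> i; rewrite !act_X act_LF.
- by move=> P R h1 h2; rewrite !actD h1 h2.
- by move=> P R h1 h2; rewrite !actM h1 h2.
- by move=> c P h; rewrite !actZ h.
Qed.

Lemma act_id (P : MP) : act 1%:M P = P.
Proof.
move: P; apply: mp_ind.
- by rewrite !act1.
- move=> i; rewrite act_X /LF (bigD1 i) //= big1 ?addr0 => [|j ji].
    by rewrite mxE eqxx scale1r.
  by rewrite mxE eq_sym (negbTE ji) scale0r.
- by move=> P R h1 h2; rewrite !actD h1 h2.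
- by move=> P R h1 h2; rewrite !actM h1 h2.
- by move=> c P h; rewrite !actZ h.
Qed.

Lemma LF_homog (Q : 'M[K]_n) k : LF Q k \is 1.-homog.
Proof.
apply: rpred_sum => j _; apply: rpredZ. rewrite dhomogX; apply/eqP; exact: mdeg1.
Qed.

Lemma act_homog (Q : 'M[K]_n) P d : P \is d.-homog -> act Q P \is d.-homog.
Proof.
move=> hP; rewrite /act comp_mpolyEX big_seq; apply: rpred_sum => m mP.
apply: rpredZ; rewrite comp_mpolyX.
have <- : mdeg m = d by move/dhomogP: hP => /(_ m mP).
rewrite mdegE.
apply: (big_ind2 (fun (x : MP) (d : nat) => x \is d.-homog)).
- exact: dhomog1.
- by move=> x1 x2 y1 y2 h1 h2; apply: dhomogM.
- move=> i _; rewrite /lin_forms tnth_mktuple; have := dhomogMn (m i) (LF_homog Q i); rewrite mul1n; exact.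

Qed.


Lemma natf_inj (ch : [pchar K] =i pred0) a b : (a%:R = b%:R :> K) -> a = b.
Proof.
move/pcharf0P: ch => ch h.
case/orP: (leq_total a b) => hab.
  have := ch (b - a)%N; rewrite natrB // h subrr eqxx => /esym/eqP; lia.
have := ch (a - b)%N; rewrite natrB // h subrr eqxx => /esym/eqP; lia.
Qed.

Lemma pm_X alpha : prod_monomial n alpha = 'X_[[multinom alpha | i < n]] :> MP.
Proof. by rewrite mpolyXE_id /prod_monomial; apply: eq_bigr => i _; rewrite mnmE. Qed.

Lemma XderE (P : MP) i :
  'X_i * P^`M(i) = \sum_(e <- msupp P) (P@_e * (e i)%:R) *: 'X_[e].
Proof.
rewrite {1}(mpolyE P) (big_morph (mderiv i) (mderivD i) (mderiv0 _ i)) mulr_sumr.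
apply: eq_bigr => e _.
rewrite mderivZ mderivX -!scalerAr scalerA.
case Ei: (e i) => [|k]; first by rewrite mulr0 !scale0r.
congr (_ *: _); rewrite -mpolyXD; congr 'X_[_]; apply/mnmP => j.
rewrite mnmDE mnmBE mnm1E; case: (i =P j) => [<-|_]; rewrite ?Ei /=; lia.

Qed.

Lemma mcoeff_sumsupp (P : MP) (w : 'X_{1..n} -> K) k :
  (\sum_(e <- msupp P) (P@_e * w e) *: 'X_[e])@_k = P@_k * w k.
Proof.
rewrite raddf_sum /=.
under eq_bigr do rewrite mcoeffZ mcoeffX.
case: (boolP (k \in msupp P)) => kP.
  rewrite (bigD1_seq k) ?msupp_uniq //= eqxx mulr1 big1 ?addr0 // => e ek.
  by rewrite (negbTE ek) mulr0.
rewrite big1_seq; last first.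
  move=> e /= eP; case: eqP => [ek|]; last by rewrite mulr0.
  by rewrite -ek eP in kP.
by move: kP; rewrite -mcoeff_eq0 => /eqP ->; rewrite mul0r.
Qed.

Lemma LieSB (A B : 'M[K]_n) P : LieS (A - B) P = LieS A P - LieS B P.
Proof.
rewrite /LieS -sumrB; apply: eq_bigr => i _; rewrite -sumrB.
by apply: eq_bigr => j _; rewrite !mxE scalerBl.
Qed.

Lemma LieS_delta i (P : MP) : LieS (delta_mx i i) P = 'X_i * P^`M(i).
Proof.
rewrite LieS_alt (bigD1 i) //= big1 ?addr0.
  rewrite /LF (bigD1 i) //= big1 ?addr0 ?mxE ?eqxx ?scale1r // => j ji.
  by rewrite mxE (negbTE ji) andbF scale0r.
move=> k ki; rewrite /LF big1 ?mul0r // => j _.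
by rewrite mxE (negbTE ki) scale0r.
Qed.

Lemma diag_mono (ch : [pchar K] =i pred0) (alpha : nat) (P : MP) :
  (0 < n)%N -> P \is (n * alpha)%N.-homog ->
  (forall i j, LieS (delta_mx i i - delta_mx j j) P = 0) ->
  P = P@_[multinom alpha | i < n] *: prod_monomial n alpha.
Proof.
move=> n0 hom hL; rewrite pm_X; apply/mpolyP => k; rewrite mcoeffZ mcoeffX.
case: (eqVneq [multinom alpha | i < n] k) => [<-|ne]; first by rewrite mulr1.
rewrite mulr0; apply/eqP; rewrite mcoeff_eq0; apply/negP => kP.
move/eqP: ne; apply.
have hk : forall i j, k i = k j.
  move=> i j; have := hL i j; rewrite LieSB !LieS_delta !XderE.
  move/(congr1 (mcoeff k)); rewrite mcoeffB !mcoeff_sumsupp mcoeff0 -mulrBr.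
  move/eqP; rewrite mulf_eq0 subr_eq0; move: kP; rewrite mcoeff_msupp.
  move=> /negbTE -> /= /eqP; exact: natf_inj.
move/dhomogP: hom => /(_ k kP) hd.
have : (\sum_i k i = n * alpha)%N by rewrite -mdegE; exact: hd.
rewrite (eq_bigr (fun _ => k (Ordinal n0))) => [|i _]; last exact: hk.
rewrite sum_nat_const card_ord => /eqP; rewrite eqn_mul2l.
case/orP => [/eqP n00|/eqP h]; first by rewrite n00 in n0.
by apply/mnmP => i; rewrite mnmE (hk i (Ordinal n0)) h.
Qed.



Lemma LieS_addA (A B : 'M[K]_n) P : LieS (A + B) P = LieS A P + LieS B P.
Proof.
rewrite /LieS -big_split; apply: eq_bigr => i _; rewrite -big_split.
by apply: eq_bigr => j _; rewrite mxE scalerDl.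
Qed.

Lemma LieS_scaleA c (A : 'M[K]_n) P : LieS (c *: A) P = c *: LieS A P.
Proof.
rewrite /LieS scaler_sumr; apply: eq_bigr => i _; rewrite scaler_sumr.
by apply: eq_bigr => j _; rewrite mxE scalerA.
Qed.

Lemma LieS_0A P : LieS 0 P = 0.
Proof. by have := LieS_scaleA 0 0 P; rewrite !scale0r. Qed.

Lemma LieS_span P m (X : m.-tuple 'M[K]_n) :
  (forall i, LieS (tnth X i) P = 0) -> forall A, (A \in <<X>>)%VS -> LieS A P = 0.
Proof.
move=> h A /coord_span ->.
rewrite (big_morph (fun A => LieS A P) (fun A B => LieS_addA A B P) (LieS_0A P)).
by apply: big1 => i _; rewrite LieS_scaleA -(tnth_nth 0) h scaler0.
Qed.

Lemma tr_span m (X : m.-tuple 'M[K]_n) :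
  (forall i, \tr (tnth X i) = 0) -> forall A, (A \in <<X>>)%VS -> \tr A = 0.
Proof.
move=> h A /coord_span ->.
rewrite (big_morph _ (@mxtraceD _ _) (@mxtrace0 _ _)).
by apply: big1 => i _; rewrite mxtraceZ -(tnth_nth 0) h mulr0.
Qed.

Section Mono.
Variables (alpha : nat) (a0 : (0 < alpha)%N).
Local Notation mu := [multinom alpha | i < n].
Definition nu (i j : 'I_n) : 'X_{1..n} := (U_(j) + (mu - U_(i)))%MM.

Lemma nuE i j x : nu i j x = ((j == x) + (alpha - (i == x)))%N.
Proof. by rewrite mnmDE mnmBE !mnm1E mnmE. Qed.

Lemma nu_diag i : nu i i = mu.
Proof. apply/mnmP => x; rewrite nuE mnmE; case: (i == x) => /=; lia. Qed.

Lemma nu_mu i j : nu i j = mu -> i = j.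
Proof.
move/mnmP => /(_ i); rewrite nuE mnmE eqxx; case: (j =P i) => // _ /=; lia.
Qed.

Lemma nu_off i j k l : k != l -> nu i j = nu k l -> i = k /\ j = l.
Proof.
move=> kl /mnmP h; have e1 := h l; have e2 := h k; rewrite !nuE in e1 e2.
rewrite eqxx (negbTE kl) in e1; rewrite eqxx (eq_sym l k) (negbTE kl) in e2.
suff: (i == k) && (j == l) by case/andP => /eqP -> /eqP ->.
move: e1 e2; case: (i == k); case: (j == l); case: (i == l); case: (j == k) => /=; lia.
Qed.

Lemma LieS_m (A : 'M[K]_n) :
  LieS A 'X_[mu] = \sum_i \sum_j (A i j * alpha%:R) *: 'X_[nu i j].
Proof.
apply: eq_bigr => i _; apply: eq_bigr => j _.
by rewrite mderivX mnmE -scalerAr -mpolyXD scalerA.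
Qed.

Lemma mcoeff_dsum (c : 'I_n -> 'I_n -> K) k :
  (\sum_i \sum_j c i j *: ('X_[nu i j] : MP))@_k =
  \sum_i \sum_j c i j * (nu i j == k)%:R.
Proof.
rewrite (big_morph (mcoeff k) (mcoeffD k) (mcoeff0 _ k)); apply: eq_bigr => i _.
rewrite (big_morph (mcoeff k) (mcoeffD k) (mcoeff0 _ k)).
by apply: eq_bigr => j _; rewrite mcoeffZ mcoeffX.
Qed.

Lemma gm_iff (ch : [pchar K] =i pred0) (A : 'M[K]_n) :
  LieS A (prod_monomial n alpha) = 0 <-> is_diag_mx A /\ \tr A = 0.
Proof.
have an0 : (alpha%:R : K) != 0 by move/pcharf0P: ch => ->; rewrite -lt0n.
rewrite pm_X LieS_m; split.
- move=> h; split.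
    apply/is_diag_mxP => k l kl.
    have {}kl : k != l by apply: contra kl => /eqP ->.
    have := congr1 (mcoeff (nu k l)) h; rewrite mcoeff0 mcoeff_dsum.
    rewrite (bigD1 k) //= (bigD1 l) //= eqxx mulr1.
    rewrite big1 ?addr0; last first.
      move=> j jl; case: eqP => [/(nu_off kl) [_ /eqP]|]; last by rewrite mulr0.
      by rewrite (negbTE jl).
    rewrite big1 ?addr0; last first.
      move=> i ik; apply: big1 => j _.
      case: eqP => [/(nu_off kl) [/eqP]|]; last by rewrite mulr0.
      by rewrite (negbTE ik).
    by move/eqP; rewrite mulf_eq0 (negbTE an0) orbF => /eqP.
  have := congr1 (mcoeff mu) h; rewrite mcoeff0 mcoeff_dsum.
  rewrite (eq_bigr (fun i => A i i * alpha%:R)); last first.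
    move=> i _; rewrite (bigD1 i) //= nu_diag eqxx mulr1 big1 ?addr0 //.
    by move=> j ji; case: eqP => [/nu_mu ij|]; [rewrite ij eqxx in ji | rewrite mulr0].
  by rewrite -mulr_suml => /eqP; rewrite mulf_eq0 (negbTE an0) orbF => /eqP.
- case=> /is_diag_mxP hd ht.
  rewrite (eq_bigr (fun i => (A i i * alpha%:R) *: 'X_[mu])); last first.
    move=> i _; rewrite (bigD1 i) //= nu_diag big1 ?addr0 // => j ji.
    by rewrite hd ?mul0r ?scale0r //; apply: contra ji => /eqP ij; apply/eqP/val_inj.
  by rewrite -scaler_suml -mulr_suml -/(\tr A) ht mul0r scale0r.
Qed.

End Mono.

End Work.

Lemma diag_comm (K : fieldType) m (A B : 'M[K]_m) :
  is_diag_mx A -> is_diag_mx B -> A *m B = B *m A.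
Proof. by move=> /diag_mxP [d ->] /diag_mxP [e ->]; exact: diag_mx_comm. Qed.

Lemma tr_delta (K : fieldType) m (r : 'I_m) : \tr (delta_mx r r : 'M[K]_m) = 1.
Proof.
rewrite /mxtrace (bigD1 r) //= mxE !eqxx big1 ?addr0 // => k kr.
by rewrite mxE (negbTE kr).
Qed.

Lemma tr_ddiff (K : fieldType) m (r s : 'I_m) :
  \tr (delta_mx r r - delta_mx s s : 'M[K]_m) = 0.
Proof.
have -> : forall A B : 'M[K]_m, \tr (A - B) = \tr A - \tr B.
  by move=> A B; rewrite /mxtrace -sumrB; apply: eq_bigr => k _; rewrite !mxE.
by rewrite !tr_delta subrr.
Qed.

Lemma diag_ddiff (K : fieldType) m (r s : 'I_m) :
  is_diag_mx (delta_mx r r - delta_mx s s : 'M[K]_m).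
Proof.
apply/is_diag_mxP => i j ij; rewrite !mxE.
have {}ij : i != j by apply: contra ij => /eqP ->.
by case: (i =P r) => [ir|]; case: (j =P r) => [jr|]; case: (i =P s) => [is_|];
  case: (j =P s) => [js|] //= *; subst; rewrite ?eqxx in ij; rewrite ?subrr ?subr0.
Qed.

Section Basis.
Variables (K : fieldType) (n' : nat).
Local Notation n := n'.+1.

Definition Dm (i : 'I_n') : 'M[K]_n :=
  delta_mx (widen_ord (leqnSn n') i) (widen_ord (leqnSn n') i)
  - delta_mx ord_max ord_max.

Lemma Dm_diag i : is_diag_mx (Dm i). Proof. exact: diag_ddiff. Qed.
Lemma Dm_tr i : \tr (Dm i) = 0. Proof. exact: tr_ddiff. Qed.

Lemma diag_tr0_span (M : 'M[K]_n) : is_diag_mx M -> \tr M = 0 ->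
  M = \sum_(i < n') M (widen_ord (leqnSn n') i) (widen_ord (leqnSn n') i) *: Dm i.
Proof.
move=> Md ht; move/is_diag_mxP: (Md) => hd.
have hM : M = \sum_(r < n) M r r *: delta_mx r r.
  apply/matrixP => r s; rewrite summxE.
  under eq_bigr do rewrite !mxE.
  case: (eqVneq r s) => [<-|rs].
    rewrite (bigD1 r) //= !eqxx mulr1 big1 ?addr0 // => k kr.
    by rewrite (eq_sym r k) (negbTE kr) mulr0.
  rewrite hd; last by apply: contra rs => /eqP/val_inj ->.
  rewrite big1 // => k _; case: (r =P k) => [rk|]; last by rewrite mulr0.
  by rewrite -rk (eq_sym s r) (negbTE rs) mulr0.
have htr : M ord_max ord_max =
    - \sum_(i < n') M (widen_ord (leqnSn n') i) (widen_ord (leqnSn n') i).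
  apply/eqP; rewrite -addr_eq0 addrC; apply/eqP.
  by move: ht; rewrite /mxtrace big_ord_recr.
rewrite {1}hM big_ord_recr /= htr scaleNr scaler_suml -sumrB.
by apply: eq_bigr => i _; rewrite /Dm scalerBr.
Qed.

Lemma Dm_entry i j :
  Dm j (widen_ord (leqnSn n') i) (widen_ord (leqnSn n') i) = (j == i)%:R.
Proof.
rewrite !mxE andbb.
have -> : (widen_ord (leqnSn n') i == ord_max) = false.
  by apply/negbTE; rewrite -val_eqE /= neq_ltn ltn_ord.
rewrite /= subr0; congr (_%:R); rewrite eq_sym -val_eqE /=.
by rewrite val_eqE.
Qed.

Definition Dt := [tuple Dm i | i < n'].

Lemma diag_tr0_in (M : 'M[K]_n) : is_diag_mx M -> \tr M = 0 -> (M \in <<Dt>>)%VS.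
Proof.
move=> hd ht; rewrite (diag_tr0_span hd ht); apply: rpred_sum => i _.
apply: rpredZ; apply: memv_span.
by have := mem_tnth i Dt; rewrite tnth_mktuple.
Qed.

Lemma dim_Dt : (\dim <<Dt>> <= n')%N.
Proof. by have := dim_span Dt; rewrite size_tuple. Qed.

End Basis.

Unset Implicit Arguments. Set Strict Implicit. Set Printing Implicit Defensive.

Theorem theorem2 (K : fieldType) (n alpha : nat)
    (charK0 : [pchar K] =i pred0) (n_pos : (0 < n)%N) (alpha_pos : (0 < alpha)%N)
    (f : {mpoly K[n]}) (f_homog : f \is (n * alpha)%N.-homog) :
  ((exists (A : 'M[K]_n) (c : K),
       A \in unitmx /\ act A (prod_monomial n alpha) = c *: f)
   <->
   (exists B : (n.-1).-tuple 'M[K]_n,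
       [/\ (forall i : 'I_n.-1, lie_alg f (tnth B i)),
           free B &
           (forall A : 'M[K]_n, lie_alg f A -> (A \in <<B>>)%VS)] /\
       [/\ (forall i : 'I_n.-1, diagonalizable (tnth B i)),
           (forall i : 'I_n.-1, \tr (tnth B i) = 0) &
           (forall i j : 'I_n.-1, tnth B i *m tnth B j = tnth B j *m tnth B i)]))
  /\
  ((exists c : K, c != 0 /\ f = c *: prod_monomial n alpha)
   <->
   (forall A : 'M[K]_n, lie_alg f A <-> (is_diag_mx A /\ \tr A = 0))).
Proof.
move: n_pos f f_homog; case: n => [//|n'] n_pos f f_homog /=.
set m := prod_monomial n'.+1 alpha.
have lieE : forall (P : {mpoly K[n'.+1]}) (A : 'M[K]_n'.+1), lie_alg P A <-> LieS A P = 0 by [].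
have m0 : m != 0.
  apply/eqP => h; have := congr1 (mcoeff [multinom alpha | i < n'.+1]) h.
  by rewrite /m pm_X mcoeffX eqxx mcoeff0 => /eqP; rewrite oner_eq0.
have nK : (n'.+1)%:R != 0 :> K by move/pcharf0P: charK0 => ->.
have act_inv : forall (Q : 'M[K]_n'.+1) (P : {mpoly K[n'.+1]}), Q \in unitmx -> act (invmx Q) (act Q P) = P.
  by move=> Q P hQ; rewrite act_comp mulmxV // act_id.
have act_inv' : forall (Q : 'M[K]_n'.+1) (P : {mpoly K[n'.+1]}), Q \in unitmx -> act Q (act (invmx Q) P) = P.
  by move=> Q P hQ; rewrite act_comp mulVmx // act_id.
have conjL : forall (Q M : 'M[K]_n'.+1) (P : {mpoly K[n'.+1]}), Q \in unitmx ->
    LieS M (act Q P) = act Q (LieS (Q *m M *m invmx Q) P).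
  by move=> Q M P hQ; apply: LieS_act; rewrite mulmxKV.
have actK0 : forall (Q : 'M[K]_n'.+1) (P : {mpoly K[n'.+1]}), Q \in unitmx -> act Q P = 0 -> P = 0.
  by move=> Q P hQ h; rewrite -(act_inv Q P hQ) h act0.
split; last first.
  split.
    case=> c [c0 ->] M; rewrite lieE LieSZ -(gm_iff alpha_pos charK0); split.
      by move/eqP; rewrite scaler_eq0 (negbTE c0) /= => /eqP.
    by move=> ->; rewrite scaler0.
  move=> H.
  have hf := diag_mono charK0 n_pos f_homog
     (fun r s => (proj2 (H _)) (conj (@diag_ddiff K _ r s) (@tr_ddiff K _ r s))).
  exists (f@_[multinom alpha | i < n'.+1]); split => //.
  apply/eqP => c0.
  have : LieS 1%:M f = 0 by rewrite hf c0 scale0r LieS0.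
  move/(proj1 (H 1%:M)) => [_]; rewrite mxtrace1 => /eqP; by rewrite (negbTE nK).
split.
  case=> A [c [hA hAc]].
  have c0 : c != 0.
    apply/eqP => c0; rewrite c0 scale0r in hAc.
    by move: m0; rewrite (actK0 _ _ hA hAc) eqxx.
  have hf : f = c^-1 *: act A m by rewrite hAc scalerA mulVf // scale1r.
  have gf : forall M, lie_alg f M <->
      is_diag_mx (A *m M *m invmx A) /\ \tr (A *m M *m invmx A) = 0.
    move=> M; rewrite lieE hf LieSZ conjL // -(gm_iff alpha_pos charK0); split.
      move/eqP; rewrite scaler_eq0 invr_eq0 (negbTE c0) /= => /eqP.
      exact: actK0 hA.
    by move=> ->; rewrite act0 scaler0.
  pose B := [tuple invmx A *m Dm K i *m A | i < n'].
  have tB : forall i, tnth B i = invmx A *m Dm K i *m A.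
    by move=> i; rewrite tnth_mktuple.
  have conjB : forall i, A *m tnth B i *m invmx A = Dm K i.
    by move=> i; rewrite tB !mulmxA mulmxV // mul1mx mulmxK.
  exists B; split; split.
  - move=> i; apply/gf; rewrite conjB; split; [exact: Dm_diag | exact: Dm_tr].
  - apply/freeP => k hk i.
    have : \sum_j k j *: Dm K j = 0.
      have e : A *m (\sum_i k i *: B`_i) *m invmx A = \sum_j k j *: Dm K j.
        rewrite mulmx_sumr mulmx_suml; apply: eq_bigr => j _.
        by rewrite -scalemxAr -scalemxAl -(tnth_nth 0) conjB.
      by rewrite -e hk mulmx0 mul0mx.
    move/matrixP => /(_ (widen_ord (leqnSn n') i) (widen_ord (leqnSn n') i)).
    rewrite summxE mxE (bigD1 i) //= big1 ?addr0.
      by rewrite mxE Dm_entry eqxx mulr1.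
    by move=> j ji; rewrite mxE Dm_entry (negbTE ji) mulr0.
  - move=> M /gf [hd ht]; have hM := diag_tr0_span hd ht.
    suff -> : M = invmx A *m (A *m M *m invmx A) *m A.
      rewrite hM mulmx_sumr mulmx_suml; apply: rpred_sum => i _.
      rewrite -scalemxAr -scalemxAl; apply: rpredZ; rewrite -tB.
      apply: memv_span; exact: mem_tnth.
    by rewrite !mulmxA mulVmx // mul1mx mulmxKV.
  - move=> i; exists A => //; rewrite /similar_to /= conjumx // conjB.
    exact: Dm_diag.
  - by move=> i; rewrite tB mxtrace_mulC mulmxA mulmxV // mul1mx; exact: Dm_tr.
  - move=> i j; rewrite !tB !mulmxA !mulmxK //.
    by rewrite -!(mulmxA (invmx A)) (diag_comm (Dm_diag K i) (Dm_diag K j)).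
case=> B [[hBl hBfree hBspan] [hBd hBtr hBc]].
have LB : forall M, (M \in <<B>>)%VS -> LieS M f = 0 := LieS_span hBl.
have f0 : f != 0.
  apply/eqP => f0.
  have : lie_alg f 1%:M by rewrite lieE f0 LieS0.
  move/hBspan/(tr_span hBtr); rewrite mxtrace1 => /eqP; by rewrite (negbTE nK).
have [P hP hPd] : codiagonalizable B.
  apply/codiagonalizableP; split.
    by move=> X Y /tnthP [i ->] /tnthP [j ->]; exact: hBc.
  by move=> X /tnthP [i ->]; exact: hBd.
have Pd : forall i, is_diag_mx (P *m tnth B i *m invmx P).
  move=> i; move/allP: hPd => /(_ _ (mem_tnth i B)).
  by rewrite /= /similar_to conjumx.
pose C := [tuple P *m tnth B i *m invmx P | i < n'].
have Cfree : free C.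
  apply/freeP => k hk; move/freeP: hBfree; apply.
  have e : invmx P *m (\sum_i k i *: C`_i) *m P = \sum_i k i *: B`_i.
    rewrite mulmx_sumr mulmx_suml; apply: eq_bigr => j _.
    rewrite -scalemxAr -scalemxAl -!(tnth_nth 0) tnth_mktuple.
    by rewrite !mulmxA mulVmx // mul1mx mulmxKV.
  by rewrite -e hk mulmx0 mul0mx.
have CinD : (<<C>> <= <<Dt K n'>>)%VS.
  apply/span_subvP => X /tnthP [i ->]; rewrite tnth_mktuple.
  apply: diag_tr0_in; first exact: Pd.
  by rewrite mxtrace_mulC mulmxA mulVmx // mul1mx hBtr.
have CD : <<C>>%VS = <<Dt K n'>>%VS.
  apply/eqP; rewrite eqEdim CinD /=; apply: leq_trans (dim_Dt _ _) _.
  by rewrite (eqP Cfree) size_tuple.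
have hE : forall r s : 'I_n'.+1,
    LieS (invmx P *m (delta_mx r r - delta_mx s s) *m P) f = 0.
  move=> r s; apply: LB.
  have : (delta_mx r r - delta_mx s s \in <<C>>)%VS.
    by rewrite CD; apply: diag_tr0_in; [exact: diag_ddiff | exact: tr_ddiff].
  move/coord_span => ->; rewrite mulmx_sumr mulmx_suml; apply: rpred_sum => i _.
  rewrite -scalemxAr -scalemxAl; apply: rpredZ.
  rewrite -(tnth_nth 0) tnth_mktuple !mulmxA mulVmx // mul1mx mulmxKV //.
  apply: memv_span; exact: mem_tnth.
have hQ : invmx P \in unitmx by rewrite unitmx_inv.
have f'h := act_homog (invmx P) f_homog.
have hL' : forall r s : 'I_n'.+1,
    LieS (delta_mx r r - delta_mx s s) (act (invmx P) f) = 0.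
  by move=> r s; rewrite conjL // invmxK hE act0.
have hf' := diag_mono charK0 n_pos f'h hL'.
set c := (act (invmx P) f)@__ in hf'.
have hf : f = c *: act P m by rewrite -actZ -hf' act_inv'.
have c0 : c != 0 by apply: contra f0 => /eqP c0; rewrite hf c0 scale0r.
exists P, c^-1; split => //; by rewrite hf scalerA mulVf // scale1r.
Qed.
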